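(* Let $w\in W^{\mathfrak p}$ and let $\mu$ be a labeling of the points of $P=\{-2n,\dots,-1,1,\dots,2n\}$ by symbols $\uparrow,\downarrow$ which is antisymmetric (the label at $-j$ is the opposite of the label at $j$ for all $j$) and has $\uparrow$ at every point $n+1,\dots,2n$. If every cup of $C(w)$ has one endpoint labeled $\uparrow$ and the other labeled $\downarrow$ by $\mu$, then the number of $j\in\{1,\dots,n\}$ with label $\uparrow$ is even.
   Context: Let $n\ge4$, $W$ the Weyl group of type $D_n$ with simple reflections $s_0,\dots,s_{n-1}$ ($s_0,s_1$ both joined to $s_2$, $s_i$ joined to $s_{i+1}$ for $i\ge2$), $W_{\mathfrak p}=\langle s_1,\dots,s_{n-1}\rangle$, $W^{\mathfrak p}$ the minimal length representatives of $W_{\mathfrak p}\backslash W$. For $w\in W^{\mathfrak p}$ let $(\alpha_1,\dots,\alpha_n)=(+,\dots,+)\cdot w$ for the right action on $\{+,-\}^n$ where $s_i$ ($i\ge1$) swaps entries $i,i+1$ and $s_0$ sends $(a_1,a_2,\dots)$ to $(-a_2,-a_1,\dots)$; set $\alpha_{-i}=-\alpha_i$. Label $P$ by $+$ at $j<-n$, $-$ at $j>n$, $\alpha_j$ at $1\le|j|\le n$. Let $M$ be the unique set of non-intersecting arcs in the lower half plane matching the points of $P$ in pairs, each arc joining a $+$ point to a $-$ point on its right. The arcs of $M$ joining a negative and a positive point are $(-y_1,y_1),\dots,(-y_{2k},y_{2k})$ with $y_1<\dots<y_{2k}$. The cup diagram $C(w)$ is obtained from $M$ by replacing, for each $j$,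 the arcs $(-y_{2j-1},y_{2j-1})$ and $(-y_{2j},y_{2j})$ by the two (linked) arcs joining $-y_{2j}$ to $y_{2j-1}$ and $-y_{2j-1}$ to $y_{2j}$; its arcs are called cups. *)

(* Defs.v *)
From mathcomp Require Import all_boot all_order all_algebra.
Set Implicit Arguments. Unset Strict Implicit. Unset Printing Implicit Defensive.
Import Order.TTheory GRing.Theory Num.Theory.

(* Weyl group of type D_n, realised faithfully as signed permutations   *)
(* of {+-1,...,+-n}.  A signed point +-(k+1) is encoded as (k, b) with   *)
(* k : nat (0-indexed position) and b : bool (the sign).  Elements of W  *)
(* are represented by words in the simple reflections s_0,...,s_{n-1};  *)
(* two words represent the same element iff they act identically.       *)

(* simple reflection s_i acting on signed points:
   s_i (i >= 1) swaps the points i and i+1 (1-indexed), keeping signs;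
   s_0 sends 1 |-> -2, 2 |-> -1 (reflection in e_1 + e_2). *)
Definition gen (i : nat) (x : nat * bool) : nat * bool :=
  let: (k, b) := x in
  if i == 0 then
    (if k == 0 then (1, ~~ b) else if k == 1 then (0, ~~ b) else (k, b))
  else
    (if k == i.-1 then (i, b) else if k == i then (i.-1, b) else (k, b)).

Fixpoint wfun (ws : seq nat) : nat * bool -> nat * bool :=
  match ws with
  | [::] => id
  | i :: ws' => fun x => gen i (wfun ws' x)
  end.

Definition Wsame (u v : seq nat) : Prop := forall x, wfun u x = wfun v x.

Definition word (n : nat) (ws : seq nat) : bool := all (fun i => i < n) ws.

(* words in the generators s_1..s_{n-1} of W_p *)
Definition pword (n : nat) (ws : seq nat) : bool := all (fun i => 0 < i < n) ws.

(* the element w represented by the word ws lies in W^p, i.e. w is of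
   minimal length in its coset W_p w:  l(w) <= l(u w) for all u in W_p. *)
Definition inWp (n : nat) (ws : seq nat) : Prop :=
  forall u v : seq nat, pword n u -> word n v -> Wsame v (u ++ ws) ->
    exists x : seq nat, [/\ word n x, Wsame x ws & size x <= size v].

(* Right action on sign sequences {+,-}^n, as functions on positions    *)
(* 1..n with true = '+' and false = '-'.                                *)
Definition sact (i : nat) (a : nat -> bool) : nat -> bool :=
  if i == 0 then
    fun j => if j == 1 then ~~ a 2 else if j == 2 then ~~ a 1 else a j
  else
    fun j => if j == i then a i.+1 else if j == i.+1 then a i else a j.

(* (alpha_1,...,alpha_n) = (+,...,+) . w  for w = s_{i1} ... s_{ik} *)
Definition alpha (ws : seq nat) : nat -> bool :=
  foldl (fun a i => sact i a) (fun _ => true) ws.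

Local Open Scope ring_scope.

Definition inP (n : nat) (j : int) : bool :=
  (j != 0) && (- (2 * n)%:Z <= j <= (2 * n)%:Z).

Definition lab (n : nat) (ws : seq nat) (j : int) : bool :=
  if j < - n%:Z then true
  else if n%:Z < j then false
  else if 0 < j then alpha ws `|j|%N
  else ~~ alpha ws `|j|%N.

(* M is a set of non-intersecting arcs (lower half plane) matching the
   points of P in pairs, each arc (a, b), a < b, joining a '+' point a to
   a '-' point b on its right. *)
Definition is_M (n : nat) (ws : seq nat) (M : seq (int * int)) : Prop :=
  [/\ (forall p, p \in M ->
         [&& inP n p.1, inP n p.2, p.1 < p.2, lab n ws p.1 & ~~ lab n ws p.2]),
      (forall j, inP n j -> count (fun p => (p.1 == j) || (p.2 == j)) M = 1%N)
    & (forall p q, p \in M -> q \in M -> ~~ [&& p.1 < q.1, q.1 < p.2 & p.2 < q.2])].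

Definition cross_arcs (M : seq (int * int)) : seq (int * int) :=
  [seq p <- M | (p.1 < 0) && (0 < p.2)].

Definition ys (M : seq (int * int)) : seq int :=
  sort (fun x y : int => x <= y) (map snd (cross_arcs M)).

Definition cups (M : seq (int * int)) : seq (int * int) :=
  [seq p <- M | ~~ ((p.1 < 0) && (0 < p.2))] ++
  flatten [seq let a := nth 0 (ys M) (2 * j) in
               let b := nth 0 (ys M) (2 * j).+1 in
               [:: (- b, a); (- a, b)]
          | j <- iota 0 (size (ys M))./2].

(* Main.v *)
Require Import Defs.
From mathcomp Require Import all_boot all_order all_algebra zify.
Import Order.TTheory GRing.Theory Num.Theory.
Local Open Scope ring_scope.

Definition sw (i j : nat) : nat := if j == i then i.+1 else if j == i.+1 then i else j.

Lemma swK i : involutive (sw i).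
Proof. move=> j; rewrite /sw; do ! (case: eqP => //=); lia. Qed.

Lemma count_sw (a : nat -> bool) i n : (0 < i < n)%N ->
  count (a \o sw i) (iota 1 n) = count a (iota 1 n).
Proof.
move=> hi; rewrite -count_map; apply/permP; apply: uniq_perm.
- by rewrite (map_inj_uniq (can_inj (swK i))) iota_uniq.
- exact: iota_uniq.
move=> x; rewrite -{1}(swK i x) mem_map; last exact: (can_inj (swK i)).
rewrite !mem_iota /sw.
case: ifP => /eqP h1; first lia. case: ifP => /eqP h2; lia.
Qed.

Lemma step_even i (a : nat -> bool) n : (2 <= n)%N -> (i < n)%N ->
  odd (count (predC (sact i a)) (iota 1 n)) = odd (count (predC a) (iota 1 n)).
Proof.
move=> hn hi; case: (posnP i) => [->|ip].
  have -> : iota 1 n = [:: 1%N; 2%N] ++ iota 3 (n - 2).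
    by rewrite -[in LHS](subnKC hn) iotaD.
  rewrite !count_cat.
  have -> : count (predC (sact 0 a)) (iota 3 (n - 2)) = count (predC a) (iota 3 (n - 2)).
    apply: eq_in_count => j; rewrite mem_iota /= /sact /= => hj.
    by case: eqP => [e|_]; [move: hj; rewrite e | case: eqP => [e|//]; move: hj; rewrite e].
  rewrite oddD [in RHS]oddD; congr addb; rewrite /= /sact /=; by case: (a 1%N); case: (a 2%N).
rewrite (@eq_count _ _ (predC a \o sw i)); first by rewrite count_sw // ip.
move=> j; rewrite /sact /= /sw; have -> : (i == 0%N) = false by case: (i) ip.
by case: (j == i); case: (j == i.+1).
Qed.

Lemma alpha_even n ws : (2 <= n)%N -> word n ws ->
  ~~ odd (count (predC (alpha ws)) (iota 1 n)).
Proof.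
move=> hn; rewrite /alpha.
suff H : forall a, ~~ odd (count (predC a) (iota 1 n)) -> word n ws ->
  ~~ odd (count (predC (foldl (fun a i => sact i a) a ws)) (iota 1 n)).
  by apply: H; elim: (iota 1 n).
elim: ws => //= i ws IH a ha /andP [hi hw]; apply: IH => //.
by rewrite step_even.
Qed.

Lemma sum_count (T : Type) (a : pred T) (s : seq T) :
  (\sum_(x <- s) (a x : nat))%N = count a s.
Proof. by elim: s => [|x s IH]; rewrite ?big_nil ?big_cons ?IH. Qed.

Lemma sum_pick (Ps : seq int) (f : int -> nat) x : uniq Ps -> x \in Ps ->
  (\sum_(j <- Ps) f j * (x == j) = f x)%N.
Proof.
elim: Ps => // y s IH /= /andP [ny us]; rewrite big_cons in_cons => /orP [/eqP exy|xs].
  rewrite exy eqxx muln1 big1_seq ?addn0 // => j /andP [_ js].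
  by case: eqP => [e|]; [move: ny; rewrite e js | rewrite muln0].
have ne : x != y by apply/eqP => e; move: ny; rewrite -e xs.
by rewrite (negbTE ne) muln0 add0n IH.
Qed.

Lemma dc (Ps : seq int) (M : seq (int * int)) (f : int -> nat) :
  uniq Ps -> (forall p, p \in M -> [/\ p.1 \in Ps, p.2 \in Ps & p.1 != p.2]) ->
  (forall j, j \in Ps -> count (fun p => (p.1 == j) || (p.2 == j)) M = 1%N) ->
  (\sum_(j <- Ps) f j = \sum_(p <- M) (f p.1 + f p.2))%N.
Proof.
move=> uP hM hc.
rewrite (eq_big_seq (fun p => \sum_(j <- Ps) f j * ((p.1 == j) || (p.2 == j))))%N; last first.
  move=> p /hM [h1 h2 ne].
  rewrite (eq_bigr (fun j => f j * (p.1 == j) + f j * (p.2 == j))%N).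
    by rewrite big_split /= !sum_pick.
  move=> j _; rewrite -mulnDr; congr (_ * _)%N.
  by case: eqP => [e|]; case: eqP => [e'|] //; move: ne; rewrite e e' eqxx.
rewrite exchange_big /=; apply: eq_big_seq => j jP.
by rewrite -big_distrr /= sum_count hc // muln1.
Qed.


Definition Ps (n : nat) : seq int :=
  [seq - (i%:Z) | i <- iota 1 (2 * n)] ++ [seq (i%:Z) | i <- iota 1 (2 * n)].

Lemma memPs n j : (j \in Ps n) = inP n j.
Proof.
rewrite /Ps /inP mem_cat; apply/idP/idP.
  case/orP => /mapP [i]; rewrite mem_iota => hi ->; lia.
case: j => [k|k] h.
  apply/orP; right; apply/mapP; exists k => //; rewrite mem_iota; lia.
apply/orP; left; apply/mapP; exists k.+1; first by rewrite mem_iota; lia.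
by rewrite NegzE.
Qed.

Lemma uniqPs n : uniq (Ps n).
Proof.
rewrite /Ps cat_uniq !map_inj_uniq ?iota_uniq //=; last first.
- by move=> x y e; lia.
- by move=> x y e; lia.
rewrite andbT; apply/hasP => [[x /mapP [i hi ->] /mapP [k hk e]]]; move: hi hk e; rewrite !mem_iota; lia.
Qed.

Lemma sumPs n (f : int -> nat) : (\sum_(j <- Ps n) f j =
  \sum_(i <- iota 1 (2 * n)) f (- i%:Z) + \sum_(i <- iota 1 (2 * n)) f i%:Z)%N.
Proof. by rewrite big_cat !big_map. Qed.

Lemma pair_even (g : int -> bool) (s : seq int) : ~~ odd (size s) ->
  (forall j, (j < (size s)./2)%N -> g (nth 0 s (2 * j)) = g (nth 0 s (2 * j).+1)) ->
  ~~ odd (count g s).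
Proof.
move: {2}(size s) (leqnn (size s)) => k; elim: k s => [|k IH] [|x [|y t]] //= hk hs hp.
rewrite oddD (hp 0%N) //= oddD addKb; apply: IH => //.
- by move: hk; rewrite ltnS; apply: leq_trans.
- by move: hs; rewrite /= negbK.
move=> j hj; have := hp j.+1; rewrite !mulnS /=; apply; by [].
Qed.


Lemma cnt0 (T : eqType) (a : pred T) (s : seq T) :
  (forall x, x \in s -> ~~ a x) -> count a s = 0%N.
Proof. by elim: s => //= x s IH h; rewrite IH ?(negbTE (h x _)) ?mem_head // => y ys; apply: h; rewrite in_cons ys orbT. Qed.

Lemma cntT (T : eqType) (a : pred T) (s : seq T) :
  (forall x, x \in s -> a x) -> count a s = size s.
Proof. by elim: s => //= x s IH h; rewrite IH ?h ?mem_head // => y ys; apply: h; rewrite in_cons ys orbT. Qed.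

Lemma labN n ws (i : nat) : (1 <= i <= n)%N -> lab n ws (- i%:Z) = ~~ alpha ws i.
Proof.
move=> hi; rewrite /lab ifF; last lia.
rewrite ifF; last lia. rewrite ifF; last lia.
by rewrite abszN absz_nat.
Qed.

Lemma labNbig n ws (i : nat) : (n < i)%N -> lab n ws (- i%:Z) = true.
Proof. move=> hi; rewrite /lab ifT //; lia. Qed.

Lemma iota2 n : iota 1 (2 * n) = iota 1 n ++ iota (1 + n) n.
Proof. by rewrite -iotaD mul2n addnn. Qed.


Theorem lemma3p5 (n : nat) (ws : seq nat) (M : seq (int * int)) (mu : int -> bool) :
  (4 <= n)%N ->
  word n ws -> inWp n ws ->
  is_M n ws M ->
  (forall j : int, inP n j -> mu (- j) = ~~ mu j) ->
  (forall j : nat, (n < j <= 2 * n)%N -> mu j%:Z) ->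
  (forall c, c \in cups M -> mu c.1 != mu c.2) ->
  ~~ odd (count (fun j : nat => mu j%:Z) (iota 1 n)).
Proof.
move=> n4 hw _ [hM hcnt _] anti hup hcup.
set cross := fun p : int * int => (p.1 < 0) && (0 < p.2).
have hM' : forall p, p \in M -> [/\ (p.1 != 0) && (p.2 != 0), p.1 < p.2,
    lab n ws p.1 & ~~ lab n ws p.2].
  move=> p /hM /and5P [i1 i2 lt l1 l2]; split => //.
  by move: i1 i2; rewrite /inP => /andP [-> _] /andP [-> _].
have hdc : forall f : int -> nat, (\sum_(j <- Ps n) f j = \sum_(p <- M) (f p.1 + f p.2))%N.
  move=> f; apply: dc; first exact: uniqPs.
    move=> p hp; have /hM /and5P [i1 i2 lt _ _] := hp.
    by rewrite !memPs i1 i2; split => //; rewrite lt_eqF.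
  by move=> j; rewrite memPs => /hcnt.
set t := count (alpha ws) (iota 1 n).
set e := count (predC (alpha ws)) (iota 1 n).
have het : (t + e = n)%N by rewrite /t /e count_predC size_iota.
set X := count cross M.
set pnc := fun p : int * int => ~~ cross p && (0 < p.1).
set C := count pnc M.
set K := count (fun p : int * int => p.2 < 0) M.
set a := count (fun j : nat => mu j%:Z) (iota 1 n).
have I1 : (2 * n = X + C + C)%N.
  have := hdc (fun j => nat_of_bool (0 < j)).
  rewrite sumPs (sum_count _ (fun i : nat => 0 < - i%:Z)) (sum_count _ (fun i : nat => 0 < i%:Z)).
  rewrite cnt0; last by move=> x; rewrite mem_iota; lia.
  rewrite cntT ?size_iota; last by move=> x; rewrite mem_iota; lia.
  rewrite (eq_big_seq (fun p => cross p + pnc p + pnc p))%N; last first.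
    move=> [x y] /hM' /= [/andP [n1 n2] lt _ _]; rewrite /pnc /cross /=; lia.
  by rewrite !big_split /= !sum_count.
have I2 : (e + n = X + K)%N.
  have := hdc (fun j => nat_of_bool ((j < 0) && lab n ws j)).
  rewrite sumPs (sum_count _ (fun i : nat => (- i%:Z < 0) && lab n ws (- i%:Z)))
    (sum_count _ (fun i : nat => (i%:Z < 0) && lab n ws i%:Z)).
  rewrite (@cnt0 _ (fun i : nat => (i%:Z < 0) && lab n ws i%:Z)); last by move=> x; rewrite mem_iota; lia.
  rewrite iota2 count_cat (eq_in_count (a2 := predC (alpha ws))); last first.
    move=> x; rewrite mem_iota => hx /=; rewrite labN; last lia. by rewrite (_ : (- x%:Z < 0) = true) //; lia.
  rewrite (@cntT _ (fun i : nat => (- i%:Z < 0) && lab n ws (- i%:Z))) ?size_iota; last by move=> x; rewrite mem_iota => hx /=; rewrite labNbig; [rewrite andbT; lia|lia].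
  rewrite (eq_big_seq (fun p => cross p + (p.2 < 0)%R))%N; last first.
    move=> [x y] /hM' /= [/andP [n1 n2] lt l1 l2].
    rewrite l1 (negbTE l2) andbT andbF /cross /=; lia.
  by rewrite !big_split /= !sum_count addn0.
have I3 : (t = K)%N.
  have := hdc (fun j => nat_of_bool ((j < 0) && ~~ lab n ws j)).
  rewrite sumPs (sum_count _ (fun i : nat => (- i%:Z < 0) && ~~ lab n ws (- i%:Z)))
    (sum_count _ (fun i : nat => (i%:Z < 0) && ~~ lab n ws i%:Z)).
  rewrite (@cnt0 _ (fun i : nat => (i%:Z < 0) && ~~ lab n ws i%:Z)); last by move=> x; rewrite mem_iota; lia.
  rewrite iota2 count_cat (eq_in_count (a2 := alpha ws)); last first.
    move=> x; rewrite mem_iota => hx /=; rewrite labN; last lia.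
    by rewrite negbK (_ : (- x%:Z < 0) = true) //; lia.
  rewrite (@cnt0 _ (fun i : nat => (- i%:Z < 0) && ~~ lab n ws (- i%:Z))); last first.
    by move=> x; rewrite mem_iota => hx /=; rewrite labNbig ?andbF //; lia.
  rewrite (eq_big_seq (fun p => nat_of_bool (p.2 < 0)%R))%N; last first.
    move=> [x y] /hM' /= [/andP [n1 n2] lt l1 l2].
    by rewrite l1 l2 andbF andbT.
  by rewrite /= sum_count !addn0.
have hc : forall p, p \in M -> ~~ cross p -> mu p.1 != mu p.2.
  by move=> p hp hn; apply: hcup; rewrite /cups mem_cat mem_filter hn hp.
have I4 : (a + n = count (fun p => cross p && mu p.2) M + C)%N.
  have := hdc (fun j => nat_of_bool ((0 < j) && mu j)).
  rewrite sumPs (sum_count _ (fun i : nat => (0 < - i%:Z) && mu (- i%:Z)))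
    (sum_count _ (fun i : nat => (0 < i%:Z) && mu i%:Z)).
  rewrite (@cnt0 _ (fun i : nat => (0 < - i%:Z) && mu (- i%:Z))); last first.
    by move=> x; rewrite mem_iota => hx /=; rewrite (_ : (0 < - x%:Z) = false) //; lia.
  rewrite iota2 count_cat (eq_in_count (a2 := fun j : nat => mu j%:Z)); last first.
    by move=> x; rewrite mem_iota => hx /=; rewrite (_ : (0 < x%:Z) = true) //; lia.
  rewrite (@cntT _ (fun i : nat => (0 < i%:Z) && mu i%:Z)) ?size_iota; last first.
    move=> x; rewrite mem_iota => hx /=; rewrite (_ : (0 < x%:Z) = true) //; last lia.
    by apply: hup; lia.
  rewrite (eq_big_seq (fun p => (cross p && mu p.2) + pnc p))%N; last first.
    move=> [x y] hp; have := hc _ hp; move: hp => /hM' /= [/andP [n1 n2] lt l1 l2].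
    rewrite /pnc /cross /=.
    case: (mu x); case: (mu y) => /= h; lia.
  by rewrite big_split /= !sum_count add0n.
have pys : perm_eq (ys M) (map snd (cross_arcs M)) by rewrite /ys perm_sort.
have hY : count (fun p => cross p && mu p.2) M = count mu (ys M).
  rewrite (permP pys) count_map /cross_arcs count_filter.
  by apply: eq_count => p; rewrite /= andbC.
have hX : size (ys M) = X by rewrite (perm_size pys) size_map /cross_arcs size_filter.
have hXe : X = (e + e)%N by lia.
have ee : ~~ odd e by apply: alpha_even => //; lia.
have hYe : ~~ odd (count mu (ys M)).
  apply: pair_even.
    by rewrite hX hXe oddD addbb.
  move=> j hj.
  have hs : ((2 * j).+1 < size (ys M))%N.
    have := odd_double_half (size (ys M)); rewrite -mul2n; lia.
  set u := nth 0 (ys M) (2 * j); set v := nth 0 (ys M) (2 * j).+1.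
  have hcu : (- v, u) \in cups M.
    rewrite /cups mem_cat; apply/orP; right; apply/flatten_mapP; exists j.
      by rewrite mem_iota; lia.
    by rewrite /= in_cons eqxx.
  have := hcup _ hcu; rewrite /=.
  have vin : v \in ys M by apply: mem_nth.
  move: vin; rewrite (perm_mem pys) => /mapP [p]; rewrite mem_filter => /andP [_ pM] ->.
  have /hM /and5P [_ i2 _ _ _] := pM.
  by rewrite anti //; case: (mu p.2); case: (mu u).
have : (a + e = count mu (ys M))%N by lia.
move/(congr1 odd); rewrite oddD => h.
by move: h ee hYe; case: (odd a); case: (odd e); case: (odd (count mu (ys M))).
Qed.
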